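(* Let $e(x,y)=(\alpha x+p(y),\beta y+\eta)$, $\alpha\beta\ne0$, be an elementary map of $\mathbb C^2$ with $e\circ e=\mathrm{id}$ and $e\neq\mathrm{id}$. Then $e$ belongs to one of the following three classes: (1) $e(x,y)=(-x+p(y),\,y)$ with $p$ any polynomial; (2) $e(x,y)=(x+p(y),\,-y+\eta)$ with $p$ odd around $\eta/2$, i.e. $p(\eta-y)=-p(y)$; (3) $e(x,y)=(-x+p(y),\,-y+\eta)$ with $p$ even around $\eta/2$, i.e. $p(\eta-y)=p(y)$. Conversely every map of these forms is an involution. Moreover, if $p$ has degree $l\ge2$, then $e$ is conjugate by an element of $C_{\mathcal S}(t)$ to a map of the following normal form, respectively: (1) $(x,y)\mapsto(-x+p(y),y)$ with $p(y)=y^l+O(y^{l-2})$ (monic, with vanishing coefficient of $y^{l-1}$); (2) $(x,y)\mapsto(x+p(y),-y)$ with $p$ an odd polynomial with leading coefficient $1$; (3) $(x,y)\mapsto(-x+p(y),-y)$ with $p$ an even polynomial with leading coefficient $1$. These normal forms are unique up to replacing $p(y)$ by $\zeta\,p(y/\zeta)$, where $\zeta$ is any root of unity with $\zeta^{l-1}=1$.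
   Context: $C_{\mathcal S}(t)$ denotes the centralizer of $t(x,y)=(y,x)$ among the affine elementary maps; concretely it consists of the maps $(x,y)\mapsto(ax+b,\,ay+b)$ with $a\ne0$. Two maps $f,g$ are $C_{\mathcal S}(t)$-conjugate if $g=s f s^{-1}$ for some $s\in C_{\mathcal S}(t)$. *)

(* Defs.v *)
From HB Require Import structures.
From mathcomp Require Import all_boot all_order all_algebra.
From mathcomp Require Import complex.
From mathcomp Require Import reals.
Set Implicit Arguments. Unset Strict Implicit. Unset Printing Implicit Defensive.
Import Order.TTheory GRing.Theory Num.Theory.
Local Open Scope ring_scope.

Definition elem (R : realType) (alpha : R[i]) (p : {poly R[i]}) (beta eta : R[i])
  : R[i] * R[i] -> R[i] * R[i] :=
  fun z => (alpha * z.1 + p.[z.2], beta * z.2 + eta).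

(* Elements of C_S(t): s(x,y) = (a x + b, a y + b), and its inverse. *)
Definition cst (R : realType) (a b : R[i]) : R[i] * R[i] -> R[i] * R[i] :=
  fun z => (a * z.1 + b, a * z.2 + b).
Definition cst_inv (R : realType) (a b : R[i]) : R[i] * R[i] -> R[i] * R[i] :=
  fun z => ((z.1 - b) / a, (z.2 - b) / a).

Definition CS_conj (R : realType) (f g : R[i] * R[i] -> R[i] * R[i]) : Prop :=
  exists a b : R[i], a != 0 /\ forall z, g z = cst a b (f (cst_inv a b z)).

Inductive invclass := Cl1 | Cl2 | Cl3.

Definition in_class (R : realType) (c : invclass) (alpha : R[i]) (p : {poly R[i]})
  (beta eta : R[i]) : Prop :=
  match c with
  | Cl1 => alpha = -1 /\ beta = 1 /\ eta = 0
  | Cl2 => alpha = 1 /\ beta = -1 /\ (forall y, p.[eta - y] = - p.[y])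
  | Cl3 => alpha = -1 /\ beta = -1 /\ (forall y, p.[eta - y] = p.[y])
  end.

Definition alpha_of (R : realType) (c : invclass) : R[i] :=
  match c with Cl1 => -1 | Cl2 => 1 | Cl3 => -1 end.
Definition beta_of (R : realType) (c : invclass) : R[i] :=
  match c with Cl1 => 1 | Cl2 => -1 | Cl3 => -1 end.

Definition nf_map (R : realType) (c : invclass) (q : {poly R[i]}) :=
  elem (alpha_of R c) q (beta_of R c) 0.

Definition nf_poly (R : realType) (c : invclass) (l : nat) (q : {poly R[i]}) : Prop :=
  size q = l.+1 /\ lead_coef q = 1 /\
  match c with
  | Cl1 => q`_(l.-1) = 0
  | Cl2 => forall y, q.[- y] = - q.[y]
  | Cl3 => forall y, q.[- y] = q.[y]
  end.

(* Main.v *)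
From HB Require Import structures.
From mathcomp Require Import all_boot all_order all_algebra.
From mathcomp Require Import complex.
From mathcomp Require Import reals.
From mathcomp Require Import ring.
Require Import Defs.
Import Order.TTheory GRing.Theory Num.Theory.
Local Open Scope ring_scope.
Set Implicit Arguments. Unset Strict Implicit.

Section Lin.
Variable F : fieldType.
Variables c d : F.
Definition uL : {poly F} := c *: 'X + d%:P.

Lemma coef_mul_uL (p : {poly F}) k :
  (p * uL)`_k = c * (if k == 0%N then 0 else p`_k.-1) + d * p`_k.
Proof.
rewrite /uL mulrDr -scalerAr coefD coefZ coefMX; congr (_ + _).
by rewrite mulrC mul_polyC coefZ.
Qed.

Lemma coef_uL_high n k : (n < k)%N -> (uL ^+ n)`_k = 0.
Proof.
elim: n k => [|n IH] k hk.
  by rewrite expr0 coef1; case: k hk.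
rewrite exprSr coef_mul_uL; case: k hk => [//|k] hk /=.
rewrite IH // IH ?mulr0 ?addr0 //; exact: ltnW.
Qed.

Lemma coef_uL_top n : (uL ^+ n)`_n = c ^+ n.
Proof.
elim: n => [|n IH]; first by rewrite !expr0 coef1.
by rewrite exprSr coef_mul_uL /= IH coef_uL_high // mulr0 addr0 exprSr mulrC.
Qed.

Lemma coef_uL_sub n : (uL ^+ n.+1)`_n = n.+1%:R * c ^+ n * d.
Proof.
elim: n => [|n IH].
  by rewrite expr1 /uL coefD coefZ coefX coefC /= mulr0 add0r expr0 !mul1r.
rewrite exprSr coef_mul_uL /= IH coef_uL_top.
rewrite [n.+2%:R]mulrSr exprS; ring.
Qed.

Lemma coef_comp_top (p : {poly F}) l : size p = l.+1 ->
  (p \Po uL)`_l = p`_l * c ^+ l.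
Proof.
move=> sp; rewrite coef_comp_poly sp big_ord_recr /= big1 ?add0r ?coef_uL_top //.
by move=> i _; rewrite coef_uL_high ?mulr0.
Qed.

Lemma coef_comp_high (p : {poly F}) l k : size p = l.+1 -> (l < k)%N ->
  (p \Po uL)`_k = 0.
Proof.
move=> sp hk; rewrite coef_comp_poly big1 // => i _.
rewrite coef_uL_high ?mulr0 //; have hi : (i < l.+1)%N by rewrite -sp ltn_ord.
exact: leq_trans hi hk.
Qed.

Lemma coef_comp_sub (p : {poly F}) m : size p = m.+2 ->
  (p \Po uL)`_m = p`_m * c ^+ m + p`_m.+1 * (m.+1%:R * c ^+ m * d).
Proof.
move=> sp; rewrite coef_comp_poly sp big_ord_recr big_ord_recr /=.
rewrite big1 ?add0r ?coef_uL_top ?coef_uL_sub //.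
by move=> i _; rewrite coef_uL_high ?mulr0.
Qed.
End Lin.

Lemma poly_ext (F : numFieldType) (p q : {poly F}) :
  (forall x, p.[x] = q.[x]) -> p = q.
Proof.
move=> H; apply/eqP; rewrite -subr_eq0; apply/eqP.
apply: (@roots_geq_poly_eq0 _ _ [seq i%:R | i <- iota 0 (size (p - q))]).
- by apply/allP => x _; rewrite /root hornerD hornerN H subrr.
- rewrite map_inj_uniq ?iota_uniq // => i j /eqP; rewrite eqr_nat => /eqP //.
- by rewrite size_map size_iota.
Qed.

Section Main.
Variable R : realType.
Local Notation C := (R[i]).

Definition Qp (p : {poly C}) (a b k : C) : {poly C} :=
  a *: (p \Po uL a^-1 (-(b/a))) + k%:P.

Lemma Qp_horner (p : {poly C}) (a b k y : C) : a != 0 -> (Qp p a b k).[y] = a * p.[(y-b)/a] + k.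
Proof.
move=> ha; rewrite /Qp hornerD hornerZ horner_comp hornerC /uL hornerD hornerZ hornerX hornerC.
congr (_ * p.[_] + _); field; exact: ha.
Qed.

Lemma Qp_size (p : {poly C}) (a b k : C) l : a != 0 -> size p = l.+1 -> (0 < l)%N ->
  size (Qp p a b k) = l.+1 /\ lead_coef (Qp p a b k) = a * lead_coef p * a^-1 ^+ l.
Proof.
move=> ha sp l0.
have cl : (Qp p a b k)`_l = a * lead_coef p * a^-1 ^+ l.
  rewrite /Qp coefD coefZ coefC coef_comp_top // (gtn_eqF l0) addr0 lead_coefE sp /=.
  by rewrite mulrA.
have lc0 : lead_coef p != 0 by rewrite lead_coef_eq0 -size_poly_gt0 sp.
have cl0 : (Qp p a b k)`_l != 0 by rewrite cl !mulf_neq0 ?expf_neq0 ?invr_eq0.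
have sz : size (Qp p a b k) = l.+1.
  apply/eqP; rewrite eqn_leq; apply/andP; split.
    apply/leq_sizeP => j hj; rewrite /Qp coefD coefZ coefC (coef_comp_high _ _ sp hj).
    by rewrite mulr0 add0r; case: j hj.
  rewrite ltnNge; apply/negP => /leq_sizeP/(_ l (leqnn l))/eqP; exact/negP.
by split => //; rewrite lead_coefE sz.
Qed.

Lemma Qp_sub (p : {poly C}) (a b k : C) m : a != 0 -> size p = m.+2 -> (0 < m)%N ->
  (Qp p a b k)`_m = a * (p`_m * a^-1 ^+ m + p`_m.+1 * (m.+1%:R * a^-1 ^+ m * -(b/a))).
Proof.
move=> ha sp m0.
by rewrite /Qp coefD coefZ coefC coef_comp_sub // (gtn_eqF m0) addr0.
Qed.

Lemma conj_iff (al be eta : C) (p q : {poly C}) :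
  CS_conj (elem al p be eta) (elem al q be 0) <->
  exists a b, a != 0 /\ (1 - be) * b + a * eta = 0 /\
    forall y, q.[y] = a * p.[(y-b)/a] + (1 - al) * b.
Proof.
split.
  move=> [a [b [ha H]]]; exists a, b; split => //; split.
    have := congr1 snd (H (b, b)); rewrite /elem /cst /cst_inv /= => h.
    move/eqP: h; rewrite eq_sym -subr_eq0 => /eqP <-; ring.
  move=> y; have := congr1 fst (H (0, y)); rewrite /elem /cst /cst_inv /= => h.
  apply/eqP; rewrite -subr_eq0; apply/eqP.
  have -> : q.[y] = al * 0 + q.[y] - al * 0 by ring.
  rewrite h; field; exact: ha.
move=> [a [b [ha [he H]]]]; exists a, b; split => // -[x y].
rewrite /elem /cst /cst_inv /=; congr (_, _).
  rewrite H; field; exact: ha.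
have -> : a * (be * ((y - b) / a) + eta) + b = be * y + ((1 - be) * b + a * eta).
  field; exact: ha.
by rewrite he addr0.
Qed.

Lemma nf_unique (c : invclass) l (q1 q2 : {poly C}) (A B : C) :
  (2 <= l)%N -> nf_poly c l q1 -> nf_poly c l q2 -> A != 0 ->
  (1 - beta_of R c) * B = 0 ->
  (forall y, q2.[y] = A * q1.[(y-B)/A] + (1 - alpha_of R c) * B) ->
  B = 0 /\ A ^+ l.-1 = 1.
Proof.
move=> hl [s1 [lc1 h1]] [s2 [lc2 h2]] hA hB H.
have E : q2 = Qp q1 A B ((1 - alpha_of R c) * B).
  by apply: poly_ext => y; rewrite Qp_horner.
case: l hl s1 s2 h1 h2 => [|m] // hl s1 s2 h1 h2.
have m0 : (0 < m)%N by [].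
have q1m1 : q1`_m.+1 = 1 by rewrite -lc1 lead_coefE s1.
have hB0 : B = 0.
  case: c lc1 lc2 h1 h2 hB H E => /= lc1 lc2 h1 h2 hB H E.
  - move: h2; rewrite E Qp_sub // h1 q1m1 mul0r add0r mul1r => /eqP.
    rewrite !mulf_eq0 oppr_eq0 (negbTE hA) pnatr_eq0 expf_eq0 invr_eq0 (negbTE hA).
    by rewrite andbF mulf_eq0 invr_eq0 (negbTE hA) !orbF /= => /eqP.
  - move/eqP: hB; rewrite mulf_eq0; rewrite opprK => /orP[|/eqP//].
    by rewrite -mulr2n pnatr_eq0.
  - move/eqP: hB; rewrite mulf_eq0; rewrite opprK => /orP[|/eqP//].
    by rewrite -mulr2n pnatr_eq0.
split => //.
have [_ ] := Qp_size B ((1 - alpha_of R c) * B) hA s1 (ltn0Sn m).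
rewrite -E lc2 lc1 mulr1 exprVn exprSr invfM mulrCA mulfV // mulr1 => h.
by apply/eqP; rewrite -invr_eq1 -h.
Qed.
End Main.

Theorem proposition3p2 (R : realType) :
  (forall (alpha beta eta : R[i]) (p : {poly R[i]}),
      alpha * beta != 0 ->
      (forall z, elem alpha p beta eta (elem alpha p beta eta z) = z) ->
      ~ (forall z, elem alpha p beta eta z = z) ->
      in_class Cl1 alpha p beta eta \/ in_class Cl2 alpha p beta eta \/
      in_class Cl3 alpha p beta eta) /\
  (forall (c : invclass) (alpha beta eta : R[i]) (p : {poly R[i]}),
      in_class c alpha p beta eta ->
      forall z, elem alpha p beta eta (elem alpha p beta eta z) = z) /\
  (forall (c : invclass) (alpha beta eta : R[i]) (p : {poly R[i]}) (l : nat),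
      in_class c alpha p beta eta ->
      (2 <= l)%N -> size p = l.+1 ->
      (exists q : {poly R[i]},
          nf_poly c l q /\ CS_conj (elem alpha p beta eta) (nf_map c q)) /\
      (forall q1 q2 : {poly R[i]},
          nf_poly c l q1 -> nf_poly c l q2 ->
          CS_conj (elem alpha p beta eta) (nf_map c q1) ->
          (CS_conj (elem alpha p beta eta) (nf_map c q2) <->
           exists zeta : R[i], zeta ^+ (l.-1) = 1 /\
             forall y, q2.[y] = zeta * q1.[y / zeta]))).
Proof.
split.
  move=> al be eta p hab inv nid.
  have E1 y : al * (al * 1 + p.[y]) + p.[be * y + eta] = 1.
    exact: (congr1 fst (inv (1, y))).
  have E0 y : al * (al * 0 + p.[y]) + p.[be * y + eta] = 0.
    exact: (congr1 fst (inv (0, y))).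
  have F1 : be * (be * 1 + eta) + eta = 1 by exact: (congr1 snd (inv (0, 1))).
  have F0 : be * (be * 0 + eta) + eta = 0 by exact: (congr1 snd (inv (0, 0))).
  have ha : al ^+ 2 = 1.
    have : (al * (al * 1 + p.[0]) + p.[be * 0 + eta]) -
           (al * (al * 0 + p.[0]) + p.[be * 0 + eta]) = 1 - 0 by rewrite E1 E0.
    by rewrite subr0 => <-; ring.
  have hb : be ^+ 2 = 1.
    have : (be * (be * 1 + eta) + eta) - (be * (be * 0 + eta) + eta) = 1 - 0.
      by rewrite F1 F0.
    by rewrite subr0 => <-; ring.
  have eta0 : be = 1 -> eta = 0.
    move=> hb1; rewrite hb1 mul1r mulr0 add0r in F0.
    by apply/eqP; move: (mulrn_eq0 eta 2); rewrite mulr2n F0 eqxx /= => /esym.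
  have /orP[/eqP hal|/eqP hal] : (al == 1) || (al == -1) by rewrite -sqrf_eq1 ha.
  - have /orP[/eqP hbe|/eqP hbe] : (be == 1) || (be == -1) by rewrite -sqrf_eq1 hb.
    + exfalso; apply: nid => -[x y]; rewrite /elem /=.
      have he := eta0 hbe.
      have hp : p.[y] = 0.
        have := E0 y; rewrite hal hbe he (_ : 1 * y + 0 = y); last ring.
        move=> h; have : p.[y] *+ 2 = 0 by rewrite -h mulr2n; ring.
        by move/eqP; rewrite mulrn_eq0 /= => /eqP.
      by rewrite hal hbe he hp mul1r mul1r !addr0.
    + right; left; split => //; split => // y.
      have := E0 y; rewrite hal hbe (_ : -1 * y + eta = eta - y); last ring.
      move=> h; apply/eqP; rewrite -subr_eq0; apply/eqP; rewrite -h; ring.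
  - have /orP[/eqP hbe|/eqP hbe] : (be == 1) || (be == -1) by rewrite -sqrf_eq1 hb.
    + by left; split => //; split => //; apply: eta0.
    + right; right; split => //; split => // y.
      have := E0 y; rewrite hal hbe (_ : -1 * y + eta = eta - y); last ring.
      move=> h; apply/eqP; rewrite -subr_eq0; apply/eqP; rewrite -h; ring.
split.
  case=> al be eta p /=.
  - move=> [-> [-> ->]] [x y]; rewrite /elem /= (_ : 1 * y + 0 = y); last ring.
    congr (_, _); ring.
  - move=> [-> [-> h]] [x y]; rewrite /elem /=.
    rewrite (_ : -1 * y + eta = eta - y); last ring.
    rewrite h; congr (_, _); ring.
  - move=> [-> [-> h]] [x y]; rewrite /elem /=.
    rewrite (_ : -1 * y + eta = eta - y); last ring.
    rewrite h; congr (_, _); ring.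
move=> c al be eta p l hc hl sp.
have [hal hbe] : al = alpha_of R c /\ be = beta_of R c.
  by case: c hc => /= -[-> [-> _]].
subst al be.
case: l hl sp => [|m] // hl sp.
have m0 : (0 < m)%N by [].
have lc0 : lead_coef p != 0 by rewrite lead_coef_eq0 -size_poly_gt0 sp.
have pl : p`_m.+1 = lead_coef p by rewrite lead_coefE sp.
pose a := m.-root (lead_coef p).
have ha : a ^+ m = lead_coef p by rewrite rootCK.
have a0 : a != 0.
  by apply/eqP => a0; move: ha; rewrite a0 expr0n (gtn_eqF m0) => /eqP; rewrite eq_sym (negbTE lc0).
have hlead : a * lead_coef p * a^-1 ^+ m.+1 = 1.
  rewrite exprVn exprSr ha; field; rewrite lc0 a0 //.
rewrite /nf_map; split.
  case: c hc => /= hc.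
  - pose b := a * p`_m / (m.+1%:R * lead_coef p).
    exists (Qp p a b ((1 - -1) * b)).
    have [sz ld] := Qp_size b ((1 - -1) * b) a0 sp (ltn0Sn m).
    split.
      split => //; split; first by rewrite ld hlead.
      rewrite /= Qp_sub // pl /b; field.
      by rewrite a0 lc0 addrC natr1 pnatr_eq0.
    apply/conj_iff; exists a, b; split => //; split.
      by case: hc => _ [_ ->]; ring.
    by move=> y; rewrite Qp_horner.
  - pose b := - (a * eta) / 2.
    exists (Qp p a b ((1 - 1) * b)).
    have [sz ld] := Qp_size b ((1 - 1) * b) a0 sp (ltn0Sn m).
    case: hc => _ [_ hc].
    split.
      split => //; split; first by rewrite ld hlead.
      move=> y; rewrite !Qp_horner // (_ : (-y - b)/a = eta - (y-b)/a).
        by rewrite hc; ring.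
      rewrite /b; field.
      exact: a0.
    apply/conj_iff; exists a, b; split => //; split.
      rewrite /b; field.
      done.
    by move=> y; rewrite Qp_horner.
  - pose b := - (a * eta) / 2.
    exists (Qp p a b ((1 - -1) * b)).
    have [sz ld] := Qp_size b ((1 - -1) * b) a0 sp (ltn0Sn m).
    case: hc => _ [_ hc].
    split.
      split => //; split; first by rewrite ld hlead.
      move=> y; rewrite !Qp_horner // (_ : (-y - b)/a = eta - (y-b)/a).
        by rewrite hc.
      rewrite /b; field.
      exact: a0.
    apply/conj_iff; exists a, b; split => //; split.
      rewrite /b; field.
      done.
    by move=> y; rewrite Qp_horner.
move=> q1 q2 n1 n2 /conj_iff [a1 [b1 [ha1 [he1 hq1]]]].
split.
  move/conj_iff => [a2 [b2 [ha2 [he2 hq2]]]].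
  pose A := a2 / a1; pose B := b2 - A * b1.
  have hA : A != 0 by rewrite mulf_neq0 ?invr_eq0.
  have hBe : (1 - beta_of R c) * B = 0.
    transitivity ((1 - beta_of R c) * b2 + a2 * eta - A * ((1 - beta_of R c) * b1 + a1 * eta)).
      rewrite /B /A; field; exact: ha1.
    by rewrite he2 he1 mulr0 subr0.
  have hQ : forall y, q2.[y] = A * q1.[(y-B)/A] + (1 - alpha_of R c) * B.
    move=> y; rewrite hq2 hq1 (_ : ((y - B)/A - b1)/a1 = (y-b2)/a2).
      rewrite /B /A; field; exact: ha1.
    rewrite /B /A; field.
    by rewrite ha2 ha1.
  have [B0 hz] := nf_unique hl n1 n2 hA hBe hQ.
  exists A; split => // y.
  by rewrite hQ B0 subr0 mulr0 addr0.
move=> [z [hz hq]].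
have z0 : z != 0.
  apply/eqP => z0; move: hz; rewrite z0 expr0n /= (gtn_eqF m0) => /eqP.
  by rewrite eq_sym oner_eq0.
apply/conj_iff; exists (z * a1), (z * b1); split; first by rewrite mulf_neq0.
split.
  transitivity (z * ((1 - beta_of R c) * b1 + a1 * eta)); first ring.
  by rewrite he1 mulr0.
move=> y; rewrite hq hq1 (_ : (y/z - b1)/a1 = (y - z*b1)/(z*a1)).
  ring.
field.
by rewrite ha1 z0.
Qed.
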